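(* Let $G$ be a closed graph on a compact metrizable space $X$. If $\mathfrak{b}<\kappa(G)$, then the poset $P_G$ adds no dominating reals (i.e. no condition of $P_G$ forces some element of $\omega^\omega$ to dominate modulo finite all ground model elements of $\omega^\omega$).
   Context: A graph $G$ on $X$ is a symmetric irreflexive relation; it is closed if it is closed in $(X\times X)\setminus$ diagonal. A $G$-anticlique is a set with no two distinct $G$-connected points. $\kappa(G)$ is the minimum cardinality of a subset of $X$ not covered by countably many compact $G$-anticliques ($\infty$ if $X$ is so covered). $\mathfrak{b}$ is the minimum cardinality of a subset of $\omega^\omega$ unbounded in the modulo-finite domination order. The poset $P_G$ consists of all pairs $p=\langle a_p,o_p\rangle$ where $a_p\subset X$ is a finite $G$-anticlique and $o_p\subset X$ is open with $a_p\subset o_p$; $q\leq p$ iff $a_p\subset a_q$ and $o_q\subset o_p$. *)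

(* Defs.v *)
From HB Require Import structures.
From mathcomp Require Import all_boot all_algebra.
From mathcomp Require Import all_classical all_reals all_analysis.
Set Implicit Arguments. Unset Strict Implicit. Unset Printing Implicit Defensive.
Local Open Scope classical_set_scope.

Section Graphs.
Variable X : topologicalType.

Definition is_graph (G : X -> X -> Prop) :=
  (forall x y, G x y -> G y x) /\ (forall x, ~ G x x).

(* closed in (X x X) minus the diagonal *)
Definition closed_graph (G : X -> X -> Prop) :=
  closure [set p : X * X | G p.1 p.2] `&` [set p : X * X | p.1 <> p.2]
    `<=` [set p : X * X | G p.1 p.2].

Definition anticlique (G : X -> X -> Prop) (A : set X) :=
  forall x y, A x -> A y -> x <> y -> ~ G x y.

Definition sigma_compact_anticlique_covered (G : X -> X -> Prop) (A : set X) :=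
  exists C : nat -> set X,
    (forall n, compact (C n) /\ anticlique G (C n)) /\
    A `<=` \bigcup_n C n.
End Graphs.

Definition le_star (f g : nat -> nat) := exists n, forall m, (n <= m)%N -> (f m <= g m)%N.
Definition unbounded_family (B : set (nat -> nat)) :=
  ~ exists g : nat -> nat, forall f, B f -> le_star f g.

(* b < kappa(G): some unbounded family B (hence one of size b) such that every
   subset of X of cardinality <= |B| is covered by countably many compact
   G-anticliques. *)
Definition b_lt_kappa (X : topologicalType) (G : X -> X -> Prop) :=
  exists B : set (nat -> nat), unbounded_family B /\
    forall A : set X, card_le A B -> sigma_compact_anticlique_covered G A.

Section Forcing.
Variables (T : Type) (P : T -> Prop) (le : T -> T -> Prop).

Definition dense_below (D : T -> Prop) (p : T) :=
  forall q, P q -> le q p -> exists r, P r /\ le r q /\ D r.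

(* R n k p  reads  "p forces  xdot(n) = k" *)
Definition real_name (R : nat -> nat -> T -> Prop) :=
  (forall n k p q, R n k p -> P q -> le q p -> R n k q) /\
  (forall n k j p q r, P p -> P q -> R n k p -> R n j q ->
       P r -> le r p -> le r q -> k = j) /\
  (forall n p, P p -> dense_below (fun q => P q /\ exists k, R n k q) p).

(* q forces  y(m) <= xdot(m) *)
Definition forces_le (R : nat -> nat -> T -> Prop) (y : nat -> nat) m q :=
  dense_below (fun r => exists k, R m k r /\ (y m <= k)%N) q.

(* p forces that xdot dominates mod finite every ground model real *)
Definition forces_dominating (R : nat -> nat -> T -> Prop) (p : T) :=
  forall y : nat -> nat,
    dense_below (fun q => exists n, forall m, (n <= m)%N -> forces_le R y m q) p.

Definition adds_no_dominating_reals :=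
  ~ exists R, real_name R /\ exists p, P p /\ forces_dominating R p.
End Forcing.

Section PG.
Variables (X : topologicalType) (G : X -> X -> Prop).
Definition PG_cond (c : set X * set X) :=
  finite_set c.1 /\ anticlique G c.1 /\ open c.2 /\ c.1 `<=` c.2.
Definition PG_le (q p : set X * set X) := p.1 `<=` q.1 /\ q.2 `<=` p.2.
End PG.

(* Main.v *)
Require Import Defs.
From mathcomp Require Import all_boot all_algebra.
From mathcomp Require Import all_classical all_reals all_analysis.
From mathcomp Require Import lra.
From mathcomp Require Import order ssralg ssrnum.
Import ArrowAsProduct.
Import Order.TTheory GRing.Theory Num.Theory.
Set Implicit Arguments. Unset Strict Implicit. Unset Printing Implicit Defensive.
Local Open Scope classical_set_scope.

Lemma near_all_seq {T : Type} (F : set_system T) {FF : Filter F} {A : eqType}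
  (s : seq A) (P : A -> T -> Prop) :
  (forall a, a \in s -> F (P a)) -> F (fun t => forall a, a \in s -> P a t).
Proof.
elim: s => [|a s IH] H.
  by apply: filterS (filterT) => t _ b; rewrite in_nil.
have H1 := H a (mem_head a s).
have H2 : F (fun t => forall b, b \in s -> P b t).
  by apply: IH => b bs; apply: H; rewrite in_cons bs orbT.
apply: filterS (filterI H1 H2) => t [Pa Ps] b; rewrite in_cons => /orP[/eqP->//|].
exact: Ps.
Qed.

Lemma near_all_lt {T : Type} (F : set_system T) {FF : Filter F} (j : nat)
  (P : nat -> T -> Prop) :
  (forall i, (i < j)%N -> F (P i)) -> F (fun t => forall i, (i < j)%N -> P i t).
Proof.
move=> H; have := @near_all_seq T F FF nat (iota 0 j) P.
move=> /(_ _) H2; apply: filterS (H2 _) => [t Ht i ij|i].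
  by apply: Ht; rewrite mem_iota.
by rewrite mem_iota add0n => /andP[_]; exact: H.
Qed.

Section Metric.
Local Open Scope ring_scope.
Variables (R : realType) (X : pseudoMetricType R).

Lemma closure_ball_interior (c : X) (r : R) : 0 < r ->
  closure (ball c r) `<=` interior (ball c (r + r)).
Proof.
move=> r0 u cu.
have r2 : 0 < r / 2 by lra.
have [v [bcv buv]] := cu _ (nbhsx_ballx u (r / 2) r2).
rewrite /interior; apply: filterS (nbhsx_ballx u (r / 2) r2) => w buw.
have -> : r + r = r + (r / 2 + r / 2) by lra.
apply: ball_triangle bcv _.
apply: ball_triangle (ball_sym buv) buw.
Qed.

Lemma near_radius (e : R) : 0 < e ->
  \forall n \near \oo, (n.+1%:R^-1 + (n.+1%:R^-1 + n.+1%:R^-1) <= e :> R).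
Proof.
move=> e0; have e3 : 0 < e / 3 by lra.
apply: filterS (near_infty_natSinv_lt (PosNum e3)) => n /= h.
have h3 : (n.+1%:R^-1 : R) < e / 3 := h.
move: h3; set t := (n.+1%:R^-1 : R) => h3; lra.
Qed.

Lemma centers (r : R) : 0 < r -> compact [set: X] ->
  exists cs : seq X, forall x, exists2 c, c \in cs & ball c r x.
Proof.
move=> r0 cpt; apply: contrapT => hno.
pose B (cs : seq X) := [set x | forall c, c \in cs -> ~ ball c r x].
have FF : Filter (filter_from [set: seq X] B).
  apply: filter_fromT_filter; first by exists [::].
  move=> s1 s2; exists (s1 ++ s2) => x Bx; split => c cs; apply: Bx;
  by rewrite mem_cat cs ?orbT.
have PF : ProperFilter (filter_from [set: seq X] B).
  apply: filter_from_proper => cs _; apply: contrapT => hne; apply: hno.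
  exists cs => x; apply: contrapT => hx; apply: hne; exists x => c cc bc.
  by apply: hx; exists c.
have [x [_ clx]] := cpt _ PF (filterT).
have [w [Bw bw]] := clx _ _ (ex_intro2 _ _ [:: x] I (@subset_refl _ _))
  (nbhsx_ballx x r r0).
by apply: (Bw x) => //; rewrite mem_head.
Qed.

End Metric.
Section Metric2.
Local Open Scope ring_scope.
Variables (R : realType) (X : pseudoMetricType R).
Lemma graph_sep (G : X -> X -> Prop) : closed_graph G -> forall w v, w <> v -> ~ G w v ->
  exists2 e : R, 0 < e & forall u v', ball w e u -> ball v e v' -> ~ G u v'.
Proof.
move=> Gcl w v wv nG.
have ncl : ~ closure [set p : X * X | G p.1 p.2] (w, v).
  by move=> cl; apply: nG; exact: (Gcl (w, v) (conj cl wv)).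
have [B nB AB] : exists2 B, nbhs (w, v) B & forall p, ~ (G p.1 p.2 /\ B p).
  apply: contrapT => hh; apply: ncl => B nB; apply: contrapT => hne; apply: hh.
  by exists B => // p hp; apply: hne; exists p.
move: nB => /nbhs_ballP [e e0 be]; exists e => // u v' bu bv Guv.
by apply: (AB (u, v')); split => //; apply: be; split.
Qed.
End Metric2.
Section Forc.
Variables (X : topologicalType) (G : X -> X -> Prop).

Lemma PG_le_refl (c : set X * set X) : PG_le c c.
Proof. by split. Qed.

Lemma PG_le_trans (a b c : set X * set X) : PG_le a b -> PG_le b c -> PG_le a c.
Proof.
move=> [ab1 ab2] [bc1 bc2]; split; [exact: subset_trans bc1 ab1|exact: subset_trans ab2 bc2].
Qed.

Lemma compat_le (Rn : nat -> nat -> set X * set X -> Prop) :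
  real_name (PG_cond G) (@PG_le X) Rn ->
  forall y m k q1 q2 r, PG_cond G r -> PG_le r q1 -> PG_le r q2 ->
  Rn m k q1 -> forces_le (PG_cond G) (@PG_le X) Rn y m q2 -> (y m <= k)%N.
Proof.
move=> [mono [comp _]] y m k q1 q2 r Pr rq1 rq2 Rk fle.
have [r' [Pr' [r'r [k' [Rk' yk']]]]] := fle r Pr rq2.
have Rkr' : Rn m k r' := mono _ _ _ _ Rk Pr' (PG_le_trans r'r rq1).
by rewrite (comp _ _ _ _ _ _ Pr' Pr' Rkr' Rk' Pr' (PG_le_refl _) (PG_le_refl _)).
Qed.

End Forc.

Section Core.
Variables (R : realType) (X : pseudoMetricType R) (G : X -> X -> Prop).
Hypotheses (Gsym : forall x y, G x y -> G y x) (Girr : forall x, ~ G x x)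
  (Gcl : closed_graph G).
Variable Rn : nat -> nat -> set X * set X -> Prop.
Hypothesis hRn : real_name (PG_cond G) (@PG_le X) Rn.

Definition tup_set (j : nat) (z : nat -> X) : set X := [set` map z (iota 0 j)].

Lemma tup_setP j z x : tup_set j z x <-> exists2 i, (i < j)%N & x = z i.
Proof.
rewrite /tup_set /=; split.
  by move/mapP => [i]; rewrite mem_iota add0n => /andP[_ ij] ->; exists i.
by move=> [i ij ->]; apply/mapP; exists i => //; rewrite mem_iota add0n.
Qed.

Lemma core (m j : nat) (L : nat -> set X) (V : set X) :
  (forall i, compact (L i)) -> (forall i, (i < j)%N -> anticlique G (L i)) ->
  open V -> (forall i, (i < j)%N -> L i `<=` V) ->
  (forall i i', (i < j)%N -> (i' < j)%N -> i <> i' ->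
     forall u v, L i u -> L i' v -> ~ G u v) ->
  exists k, forall z : nat -> X, (forall i, L i (z i)) ->
   exists d, PG_cond G d /\ (exists2 k', (k' <= k)%N & Rn m k' d) /\
     tup_set j z `<=` d.2 /\ d.1 `<=` V /\ anticlique G (d.1 `|` tup_set j z).
Proof.
move=> cL aL oV LV Lfree.
pose S := [set z : nat -> X | forall i, L i (z i)].
have cS : compact S := tychonoff cL.
have anti_z z : S z -> anticlique G (tup_set j z).
  move=> Sz u v /tup_setP[i ij ->] /tup_setP[i' i'j ->] neq.
  have [ii'|ii'] := eqVneq i i'; first by move: neq; rewrite ii'.
  exact: (Lfree _ _ ij i'j (elimN eqP ii')).
have cond_z z : S z -> PG_cond G (tup_set j z, V).
  move=> Sz; split; first by apply/finite_seqP; exists (map z (iota 0 j)).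
  split; first exact: anti_z.
  split => // x /tup_setP[i ij ->]; exact: (LV i ij).
pose Q k z := exists d, PG_cond G d /\ (exists2 k', (k' <= k)%N & Rn m k' d) /\
     tup_set j z `<=` d.2 /\ d.1 `<=` V /\ anticlique G (d.1 `|` tup_set j z).
suff [k0 _ Hk] : \forall k \near \oo, S `<=` Q k.
  by exists k0 => z Sz; apply: (Hk k0 (leqnn k0)).
move: cS => /compact_near_coveringP /near_covering_withinP.
apply => z Sz.
have [_ [_ dens]] := hRn.
have [d [Pd [led [_ [k0 Rd]]]]] := dens m _ (cond_z z Sz) _ (cond_z z Sz) (PG_le_refl _).
move: (Pd) => [fd [ad [od sd12]]].
move: led => [/= zd dV].
have [sd defd] := (iffLR (finite_seqP _)) fd.
have N1 : \forall x' \near z, forall i, (i < j)%N -> d.2 (x' i).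
  apply: near_all_lt => i ij.
  apply: (@proj_continuous nat (fun _ => X) i z).
  apply: open_nbhs_nbhs; split => //.
  by apply: sd12; apply: zd; apply/tup_setP; exists i.
have N2 : \forall x' \near z, forall w, w \in sd -> forall i, (i < j)%N ->
    S x' -> ~ G w (x' i).
  apply: near_all_seq => w wsd; apply: near_all_lt => i ij.
  have wd : d.1 w by rewrite defd.
  have zid : d.1 (z i) by apply: zd; apply/tup_setP; exists i.
  have [wz|wz] := pselect (w = z i).
    apply: (@nearW _ (nbhs z) _) => x' Sx'; rewrite wz.
    have [e|ne] := pselect (z i = x' i); first by rewrite e; exact: Girr.
    exact: (aL i ij _ _ (Sz i) (Sx' i) ne).
  have [e e0 He] := graph_sep Gcl wz (ad _ _ wd zid wz).
  have nb : nbhs (z i) (ball (z i) e) by exact: nbhsx_ballx.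
  have H := @proj_continuous nat (fun _ => X) i z _ nb.
  apply: (@filterS _ (nbhs z) _ (proj i @^-1` ball (z i) e)) => [x' bx' _|].
    by apply: He bx'; exact: ballxx.
  exact: H.
near=> x' k => Sx'.
have h1 : forall i, (i < j)%N -> d.2 (x' i) by near: x'; exact: N1.
have h2 : forall w, w \in sd -> forall i, (i < j)%N -> S x' -> ~ G w (x' i).
  by near: x'; exact: N2.
have hk : (k0 <= k)%N by near: k; exists k0.
exists d; split => //; split; first by exists k0.
split; first by move=> x /tup_setP[i ij ->]; exact: h1.
split; first by move=> x /sd12 /dV.
move=> u v [ud|uz] [vd|vz] uv.
- exact: ad.
- move: vz => /tup_setP[i ij ->]; apply: h2 => //; by move: ud; rewrite defd.
- move: uz => /tup_setP[i ij ->] G'; apply: (h2 v _ i ij Sx'); last exact: Gsym.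
  by move: vd; rewrite defd.
- exact: (anti_z x' Sx').
Unshelve. all: by end_near.
Qed.

End Core.

Section Main.
Local Open Scope ring_scope.
Variables (R : realType) (X : pseudoMetricType R) (G : X -> X -> Prop).
Hypotheses (Gsym : forall x y, G x y -> G y x) (Girr : forall x, ~ G x x)
  (Gcl : closed_graph G) (cpt : compact [set: X]).
Variables (B : set (nat -> nat)).
Hypotheses (Bunb : unbounded_family B)
  (Bcov : forall A : set X, card_le A B -> sigma_compact_anticlique_covered G A).
Variable Rn : nat -> nat -> set X * set X -> Prop.
Hypothesis hRn : real_name (PG_cond G) (@PG_le X) Rn.
Variable p : set X * set X.
Hypotheses (Pp : PG_cond G p)
  (Hdom : forces_dominating (PG_cond G) (@PG_le X) Rn p).

Lemma empty_case : ~ (exists x : X, True) -> False.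
Proof.
move=> Xe.
have H m : exists kr : nat * (set X * set X), PG_cond G kr.2 /\ Rn m kr.1 kr.2.
  have [_ [_ dens]] := hRn.
  have [r [Pr [_ [_ [k Rk]]]]] := dens m p Pp p Pp (PG_le_refl p).
  by exists (k, r).
have [f Hf] := choice H.
have HH := Hdom (fun m => (f m).1.+1).
have [q [Pq [qp [n Hn]]]] := HH p Pp (PG_le_refl p).
have [Pr Rr] := Hf n.
have le1 : PG_le q (f n).2 by split => x _; exfalso; apply: Xe; exists x.
have := compat_le hRn Pq le1 (PG_le_refl q) Rr (Hn n (leqnn n)).
by rewrite ltnn.
Qed.


Lemma main_case (x0 : X) : False.
Proof.
have H1 y : exists qN : (set X * set X) * nat, B y ->
    PG_cond G qN.1 /\ PG_le qN.1 p /\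
    forall m, (qN.2 <= m)%N -> forces_le (PG_cond G) (@PG_le X) Rn y m qN.1.
  case: (pselect (B y)) => By; last by exists ((set0, set0), 0%N).
  have HH := Hdom y.
  have [q [Pq [qp [N HN]]]] := HH p Pp (PG_le_refl p).
  by exists (q, N).
have [fq Hfq] := choice H1.
have H2 y : exists s : seq X, B y -> uniq s /\ (fq y).1.1 = [set` s].
  case: (pselect (B y)) => By; last by exists [::].
  have [[fin _] _] := Hfq y By.
  have [s ->] := (iffLR (finite_seqP _)) fin.
  exists (undup s) => _; split; first exact: undup_uniq.
  by apply/seteqP; split => x /=; rewrite mem_undup.
have [fs Hfs] := choice H2.
pose pt y i := nth x0 (fs y) i.
have H3 i : sigma_compact_anticlique_covered G [set pt y i | y in B].
  by apply: Bcov; exact: card_image_le.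
have [Cv HCv] := choice H3.
have H4 y : exists f : nat -> nat, forall i, B y -> Cv i (f i) (pt y i).
  have H4' i : exists n, B y -> Cv i n (pt y i).
    case: (pselect (B y)) => By; last by exists 0%N.
    have [_ cov] := HCv i.
    have [n _ Cn] := cov (pt y i) (ex_intro2 _ _ y By erefl).
    by exists n.
  by have [f Hf] := choice H4'; exists f.
have [fidx Hfidx] := choice H4.
pose r (n : nat) : R := n.+1%:R^-1.
have rpos n : 0 < r n by rewrite /r invr_gt0 ltr0n.
have H5 n : exists cs : seq X, forall x, exists2 c, c \in cs & ball c (r n) x.
  exact: centers.
have [fcs Hfcs] := choice H5.
have H6 n : exists f : X -> nat, forall x, ball (nth x0 (fcs n) (f x)) (r n) x.
  have H6' x : exists t, ball (nth x0 (fcs n) t) (r n) x.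
    have [c cin bc] := Hfcs n x.
    by exists (index c (fcs n)); rewrite nth_index.
  by have [f Hf] := choice H6'; exists f.
have [ftc Hftc] := choice H6.
pose good y n := (forall i, (i < size (fs y))%N ->
      ball (pt y i) (r n + (r n + r n)) `<=` (fq y).1.2) /\
   (forall i, (i < size (fs y))%N -> forall i', (i' < size (fs y))%N -> i <> i' ->
      forall u v, ball (pt y i) (r n + (r n + r n)) u ->
        ball (pt y i') (r n + (r n + r n)) v -> ~ G u v).
have H7 y : exists n, B y -> good y n.
  case: (pselect (B y)) => By; last by exists 0%N.
  have [[_ [ay [oy ayoy]]] _] := Hfq y By.
  have [us eqs] := Hfs y By.
  have inay i : (i < size (fs y))%N -> (fq y).1.1 (pt y i).
    by move=> ilt; rewrite eqs /=; exact: mem_nth.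
  suff [N _ HN] : \forall n \near \oo, good y n by exists N => _; apply: HN => /=.
  apply: filterI.
    apply: near_all_lt => i ilt.
    have : nbhs (pt y i) (fq y).1.2.
      by apply: open_nbhs_nbhs; split => //; apply: ayoy; exact: inay.
    move=> /nbhs_ballP [e e0 be].
    apply: filterS (near_radius e0) => n hn; apply: subset_trans be.
    exact: le_ball.
  apply: near_all_lt => i ilt; apply: near_all_lt => i' i'lt.
  have [ii'|ii'] := pselect (i = i'); first by exists 0%N => // n _ nii; exfalso; exact: nii ii'.
  have neq : pt y i <> pt y i'.
    by move=> /eqP; rewrite /pt nth_uniq // => /eqP.
  have [e e0 He] := graph_sep Gcl neq (ay _ _ (inay i ilt) (inay i' i'lt) neq).
  apply: filterS (near_radius e0) => n hn _ u v bu bv.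
  by apply: He; [exact: le_ball hn _ bu | exact: le_ball hn _ bv].
have [frad Hfrad] := choice H7.
pose kap y : nat * nat * seq (nat * nat) := ((fq y).2, frad y,
  [seq (ftc (frad y) (pt y i), fidx y i) | i <- iota 0 (size (fs y))]).
have H8 (ka : nat * nat * seq (nat * nat)) :
    exists g : nat -> nat, forall y, B y -> kap y = ka -> le_star y g.
  case: ka => [[N n] l].
  case: (pselect (exists y0, B y0 /\ kap y0 = (N, n, l))); last first.
    by move=> nocl; exists id => y By ky; exfalso; apply: nocl; exists y.
  move=> [y0 [By0 ky0]].
  pose j := size l.
  pose c i := nth x0 (fcs n) (nth (0, 0)%N l i).1.
  pose L i := if (i < j)%N then Cv i (nth (0, 0)%N l i).2 `&` closure (ball (c i) (r n))
              else setT.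
  pose V := \bigcup_(i in [set i | (i < j)%N]) interior (ball (c i) (r n + r n)).
  have cls y : B y -> kap y = (N, n, l) ->
      [/\ (fq y).2 = N, frad y = n, size (fs y) = j,
       forall i, (i < j)%N -> ball (c i) (r n) (pt y i) &
       forall i, (i < j)%N -> Cv i (nth (0, 0)%N l i).2 (pt y i)].
    move=> By [eN en el].
    have sj : size (fs y) = j by rewrite /j -el size_map size_iota.
    have nl i : (i < j)%N -> nth (0, 0)%N l i = (ftc n (pt y i), fidx y i).
      move=> ij; rewrite -el (nth_map 0%N); last by rewrite size_iota sj.
      by rewrite nth_iota ?add0n ?sj // en.
    split => // i ij.
      by rewrite /c nl //=; exact: Hftc.
    by rewrite nl //=; exact: Hfidx.
  have Lpt y : B y -> kap y = (N, n, l) -> forall i, L i (pt y i).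
    move=> By ky i; rewrite /L; case: ifP => // ij.
    have [_ _ _ hb hc] := cls y By ky.
    by split; [exact: hc | apply: subset_closure; exact: hb].
  have cL i : compact (L i).
    rewrite /L; case: ifP => // ij.
    apply: compact_closedI; last exact: closed_closure.
    by have [hc _] := HCv i; have [] := hc (nth (0, 0)%N l i).2.
  have aL i : (i < j)%N -> anticlique G (L i).
    move=> ij u v; rewrite /L ij => [[Cu _] [Cv' _]].
    by have [hc _] := HCv i; have [_ ] := hc (nth (0, 0)%N l i).2; apply.
  have oV : open V by apply: bigcup_open => i _; exact: open_interior.
  have LiV i u : (i < j)%N -> L i u -> interior (ball (c i) (r n + r n)) u.
    move=> ij; rewrite /L ij => -[_ cu].
    exact: closure_ball_interior (rpos n) _ cu.
  have LV i : (i < j)%N -> L i `<=` V.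
    by move=> ij u Lu; exists i => //; exact: LiV.
  have ballpt y i u : B y -> kap y = (N, n, l) -> (i < j)%N ->
      interior (ball (c i) (r n + r n)) u ->
      ball (pt y i) (r n + (r n + r n)) u.
    move=> By ky ij /interior_subset bu.
    have [_ _ _ hb _] := cls y By ky.
    exact: ball_triangle (ball_sym (hb i ij)) bu.
  have Lfree : forall i i', (i < j)%N -> (i' < j)%N -> i <> i' ->
      forall u v, L i u -> L i' v -> ~ G u v.
    move=> i i' ij i'j ii' u v Lu Lv.
    have [_ en sj _ _] := cls y0 By0 ky0.
    have [_ hf] := Hfrad y0 By0; rewrite en sj in hf.
    apply: (hf i ij i' i'j ii').
      exact: ballpt By0 ky0 ij (LiV _ _ ij Lu).
    exact: ballpt By0 ky0 i'j (LiV _ _ i'j Lv).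
  have H9 m := core Gsym Girr Gcl hRn m cL aL oV LV Lfree.
  have [gk Hgk] := choice H9.
  exists gk => y By ky; exists N => m Nm.
  have [eN en sj hb hc] := cls y By ky.
  have [d [Pd [[k' k'k Rk'] [zd [dV ad]]]]] := Hgk m (pt y) (Lpt y By ky).
  have [[fy [ay [oy ayoy]]] [yp HN]] := Hfq y By.
  have [us eqs] := Hfs y By.
  have tupE : tup_set j (pt y) = (fq y).1.1.
    by rewrite eqs /tup_set -sj -/(mkseq _ _) mkseq_nth.
  rewrite tupE in zd ad.
  have VO : V `<=` (fq y).1.2.
    move=> u [i ij iu]; have [ha _] := Hfrad y By; rewrite en sj in ha.
    exact: (ha i ij) (ballpt y i u By ky ij iu).
  have aV : (fq y).1.1 `<=` V.
    by rewrite -tupE => x /tup_setP[i ij ->]; exact: (LV i ij) (Lpt y By ky i).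
  move: (Pd) => [fd [_ [od d12]]].
  pose e' := (d.1 `|` (fq y).1.1, d.2 `&` V).
  have Pe : PG_cond G e'.
    split; first by rewrite /e' /= finite_setU.
    split; first exact: ad.
    split; first exact: openI.
    move=> x [xd|xa]; split.
    - exact: d12.
    - exact: dV.
    - exact: zd.
    - exact: aV.
  have le1 : PG_le e' d by split => [x xd|x []]; [left|].
  have le2 : PG_le e' (fq y).1 by split => [x xa|x [_ /VO]]; [right|].
  have := compat_le hRn Pe le1 le2 Rk' (HN m _).
  rewrite eN; move=> /(_ Nm) ymk.
  exact: leq_trans ymk k'k.
have [gka Hgka] := choice H8.
apply: Bunb.
pose h (m : nat) := \max_(k < m.+1)
   (if unpickle k is Some ka then gka ka m else 0%N).
exists h => y By.
have [n0 Hn0] := Hgka (kap y) y By erefl.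
exists (maxn n0 (pickle (kap y))) => m.
rewrite geq_max => /andP[n0m km].
apply: leq_trans (Hn0 m n0m) _.
have := @leq_bigmax _ (fun k : 'I_m.+1 =>
   (if unpickle k is Some ka then gka ka m else 0%N)) (Ordinal (km : (pickle (kap y) < m.+1)%N)).
by rewrite /= pickleK.
Qed.
End Main.

Theorem theorem2p3 (R : realType) (X : pseudoMetricType R)
  (G : X -> X -> Prop) :
  hausdorff_space X -> compact [set: X] ->
  is_graph G -> closed_graph G ->
  b_lt_kappa G ->
  adds_no_dominating_reals (PG_cond G) (@PG_le X).
Proof.
move=> _ cpt [Gsym Girr] Gcl [B [Bunb Bcov]] [Rn [hRn [p [Pp Hdom]]]].
case: (pselect (exists x : X, True)) => [[x0 _]|Xe].
  exact: (main_case Gsym Girr Gcl cpt Bunb Bcov hRn Pp Hdom x0).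
exact: (empty_case hRn Pp Hdom Xe).
Qed.
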